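(* Let $k$ be a positive integer and let $\zeta$ be a primitive $2k$-th root of unity. Let $Q_k$ denote the set of quasipolarities of $\mathbb{Z}/2k\mathbb{Z}$. Then \[ \sum_{\pi\in Q_{k}}\prod_{j=0}^{2k-1}\frac{1+\zeta^{j-\pi(j)}}{1-\zeta^{j-\pi(j)}} = [2\mid k]\,(|Q_{2k}|-|Q_{k}|) = [2\mid k]\,(s_{1}^{*}(2k)-s_{1}^{*}(k)), \] where $[2\mid k]$ equals $1$ if $k$ is even and $0$ if $k$ is odd.
   Context: The affine general linear group $\overrightarrow{GL}(\mathbb{Z}/m\mathbb{Z})$ consists of the maps $e^{u}.v:\mathbb{Z}/m\mathbb{Z}\to\mathbb{Z}/m\mathbb{Z}$, $x\mapsto vx+u$, with $u\in\mathbb{Z}/m\mathbb{Z}$ and $v\in(\mathbb{Z}/m\mathbb{Z})^{\times}$. For a positive integer $k$, $Q_k$ is the set of quasipolarities of $\mathbb{Z}/2k\mathbb{Z}$, i.e. elements $\pi\in\overrightarrow{GL}(\mathbb{Z}/2k\mathbb{Z})$ that are involutions ($\pi\circ\pi=\mathrm{id}$) and derangements ($\pi(x)\neq x$ for all $x$); thus $Q_{2k}$ is the corresponding set for $\mathbb{Z}/4k\mathbb{Z}$. Elements $j\in\{0,\dots,2k-1\}$ are identified with residues mod $2k$; the exponent $j-\pi(j)$ is taken mod $2k$ (well defined since $\zeta^{2k}=1$), and denominators are nonzero because $\pi$ is a derangement. A divisor $d$ of $n$ is unitary if $\gcd(d,n/d)=1$, and $s_1^{*}(n)$ denotes the sum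 of the unitary divisors of $n$. *)

(* Defs.v *)
From mathcomp Require Import all_boot all_order all_algebra all_field.
Set Implicit Arguments. Unset Strict Implicit. Unset Printing Implicit Defensive.

(* An element e^u.v of the affine general linear group of Z/mZ is encoded by
   the pair (u, v) of residues in 'I_m (u, v in {0,..,m-1}); it acts on
   residues x in {0,..,m-1} by x |-> (v * x + u) mod m.  For m >= 2 distinct
   pairs give distinct maps (values at 0 and 1 determine u and v). *)
Definition aff_act (m : nat) (p : 'I_m * 'I_m) (x : nat) : nat :=
  (p.2 * x + p.1) %% m.

Definition quasipolarities (m : nat) : {set 'I_m * 'I_m} :=
  [set p : 'I_m * 'I_m | [&& coprime p.2 m,
      [forall x : 'I_m, aff_act p (aff_act p x) == x] &
      [forall x : 'I_m, aff_act p x != x]]].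

Definition Q (k : nat) := quasipolarities k.*2.

Definition s1star (n : nat) : nat :=
  \sum_(d <- divisors n | coprime d (n %/ d)) d.

(* Main.v *)
Require Import Defs.
From mathcomp Require Import all_boot all_order all_algebra all_field.
From mathcomp Require Import zify ring.

Definition UD n d := (d %| n) && coprime d (n %/ d).
Definition Rel n (u v d x : nat) :=
  [/\ u = (n %/ d) * x.*2.+1, (n %/ d).*2 %| v.-1 & d.*2 %| v.+1].

Lemma mod_add_dvd m x M : m %| M -> (x + M) %% m = x %% m.
Proof. by move/dvdnP=> [q ->]; rewrite addnC modnMDl. Qed.

Lemma rel_v0 v d : d.*2 %| v.+1 -> 0 < v.
Proof. by case: v => //; rewrite dvdn1 => /eqP; lia. Qed.

Lemma rel_Q n (p : 'I_n.*2 * 'I_n.*2) d x : 0 < n -> d %| n ->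
  Rel n p.1 p.2 d x -> p \in quasipolarities n.*2.
Proof.
case: p => [[u ltu] [v ltv]] /= n0 dn [hu h1 h2].
set e := n %/ d in hu h1.
have hn : n = d * e by rewrite mulnC divnK.
have v0 := rel_v0 _ _ h2.
have hvv : v.-1 * v.+1 + 1 = v * v by case: (v) v0 => // w _; rewrite /=; ring.
have hm1 : n.*2 %| v.-1 * v.+1.
  apply: dvdn_trans (dvdn_mul h1 h2).
  by apply/dvdnP; exists 2; rewrite hn -!muln2; ring.
have hm2 : n.*2 %| v.+1 * u.
  rewrite hu hn doubleMl; apply: dvdn_mul h2 (dvdn_mulr _ (dvdnn e)).
rewrite inE /=; apply/and3P; split.
- rewrite /coprime; set g := gcdn v n.*2.
  have g1 : g %| v * v by apply: dvdn_mulr; apply: dvdn_gcdl.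
  have g2 : g %| v.-1 * v.+1 by apply: dvdn_trans (dvdn_gcdr _ _) hm1.
  by rewrite -hvv (dvdn_addr _ g2) dvdn1 in g1.
- apply/forallP => -[x0 lt0]; rewrite /aff_act /=.
  rewrite -modnDml modnMmr modnDml.
  have -> : v * (v * x0 + u) + u = x0 + (v.-1 * v.+1 * x0 + v.+1 * u).
    by case: (v) v0 => // w _ /=; ring.
  rewrite mod_add_dvd ?modn_small //.
  by apply: dvdn_add => //; apply: dvdn_mulr.
- apply/forallP => -[x0 lt0]; rewrite /aff_act /=; apply/negP => /eqP H.
  have E := divn_eq (v * x0 + u) n.*2; rewrite H in E.
  have E2 : v.-1 * x0 + u = (v * x0 + u) %/ n.*2 * n.*2.
    apply/eqP; rewrite -(eqn_add2r x0) -E; apply/eqP.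
    by case: (v) v0 => // w _ /=; ring.
  have : e.*2 %| v.-1 * x0 + u.
    by rewrite E2 hn; apply: dvdn_mull; rewrite doubleMr; apply: dvdn_mull.
  rewrite (dvdn_addr _ (dvdn_mulr _ h1)) hu -muln2. rewrite dvdn_pmul2l; last first.
    by rewrite lt0n; apply/eqP => e0; move: hn; rewrite e0 muln0; lia.
  by rewrite dvdn2 /= odd_double.
Qed.

Lemma Q_rel n (p : 'I_n.*2 * 'I_n.*2) : 0 < n -> p \in quasipolarities n.*2 ->
  exists d x, [/\ UD n d, x < d & Rel n p.1 p.2 d x].
Proof.
case: p => [[u ltu] [v ltv]] n0; rewrite inE /= => /and3P [cop /forallP inv /forallP der].
have m1 : 1 < n.*2 by lia.
have m0 : 0 < n.*2 by lia.
have v0 : 0 < v.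
  by case: (v) cop => // ; rewrite /coprime gcd0n => /eqP; lia.
have hu0 : n.*2 %| v.+1 * u.
  have := inv (Ordinal m0); rewrite /aff_act /= muln0 add0n (modn_small ltu).
  by rewrite /dvdn mulSnr.
have hvv : n.*2 %| v.-1 * v.+1.
  have := inv (Ordinal m1); rewrite /aff_act /= muln1 -modnDml modnMmr modnDml.
  have -> : v * (v + u) + u = 1 + v.-1 * v.+1 + v.+1 * u.
    by case: (v) v0 => // w _ /=; ring.
  rewrite mod_add_dvd // -[X in _ == X](modn_small m1) -[X in _ == X %% _]addn0.
  by rewrite eqn_modDl mod0n.
set g := gcdn v.-1 n.*2.
have g0 : 0 < g by rewrite gcdn_gt0 m0 orbT.
have gm : g %| n.*2 by apply: dvdn_gcdr.
have gv : g %| v.-1 by apply: dvdn_gcdl.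
have gu : ~~ (g %| u).
  apply/negP => gu.
  have [a lta ha] := Bezoutl v.-1 m0.
  set c := u %/ g.
  have uc : u = c * g by rewrite divnK.
  set x0 := (a * c) %% n.*2.
  have hx0 : x0 < n.*2 by rewrite ltn_mod.
  have := der (Ordinal hx0); rewrite /aff_act /= => /negP; apply; apply/eqP.
  have : n.*2 %| v.-1 * x0 + u.
    have E := divn_eq (a * c) n.*2.
    have : n.*2 %| v.-1 * x0 + u + (v.-1 * ((a * c) %/ n.*2)) * n.*2.
      have -> : v.-1 * x0 + u + (v.-1 * ((a * c) %/ n.*2)) * n.*2 =
                c * (g + a * v.-1).
        rewrite /x0 uc; move: E; set q := (a * c) %/ n.*2; set r := (a * c) %% n.*2.
        move=> E; rewrite -mulnA (mulnC _ (n.*2)) mulnA.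
        have -> : c * (g + a * v.-1) = c * g + v.-1 * (a * c) by ring.
        by rewrite E; ring.
      by apply: dvdn_mull; rewrite /g gcdnC.
    by move=> H; rewrite -(dvdn_addl (v.-1 * x0 + u) (dvdn_mull (v.-1 * ((a * c) %/ n.*2)) (dvdnn n.*2))).
  move=> hd.
  have -> : v * x0 + u = x0 + (v.-1 * x0 + u) by case: (v) v0 => // w _ /=; ring.
  by rewrite mod_add_dvd // modn_small.
have g2u : g %| 2 * u.
  have : g %| v.+1 * u by apply: dvdn_trans gm hu0.
  have -> : v.+1 * u = v.-1 * u + 2 * u by case: (v) v0 => // w _ /=; ring.
  by rewrite dvdn_addr // dvdn_mulr.
have geven : ~~ odd g.
  apply/negP => og; move: gu; rewrite -(Gauss_dvdr u (_ : coprime g 2)) ?g2u //.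
  by rewrite coprimen2.
set e := g./2.
have ge : g = e.*2 by rewrite /e even_halfK.
have e0 : 0 < e by move: g0; rewrite ge double_gt0.
have en : e %| n by move: gm; rewrite ge -!muln2 dvdn_pmul2r.
set d := n %/ e.
have hn : n = d * e by rewrite divnK.
have d0 : 0 < d by move: n0; rewrite hn; case: (d) => //.
have nd : n %/ d = e by rewrite hn mulKn.
have eu : e %| u by move: g2u; rewrite ge -!muln2 mulnC dvdn_pmul2l.
set a := u %/ e.
have ua : u = e * a by rewrite mulnC divnK.
have oa : odd a.
  apply/negPn/negP => ea; move: gu; rewrite ua ge -(even_halfK ea) -!muln2.
  by rewrite [a./2 * 2]mulnC mulnA dvdn_mulr.
set x := a./2.
have ax : a = x.*2.+1 by rewrite /x -[in LHS](odd_double_half a) oa.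
set t := v.-1 %/ g.
have vt : v.-1 = g * t by rewrite mulnC divnK.
have md : n.*2 = g * d by rewrite ge hn -!muln2; ring.
have ctd : coprime t d.
  have : g = g * gcdn t d by rewrite muln_gcdr -vt -md.
  by rewrite /coprime -{1}[g]muln1 => /eqP; rewrite eqn_pmul2l // eq_sym.
set s := e * t + 1.
have vs : v.+1 = s.*2.
  have -> : v.+1 = v.-1 + 2 by case: (v) v0 => // w _; rewrite addn2.
  by rewrite vt ge /s -!muln2; ring.
have ds2 : d %| s.*2.
  move: hvv; rewrite vs vt md -mulnA dvdn_pmul2l //.
  by rewrite mulnC Gauss_dvdl // coprime_sym.
have dsa : d %| s * a.
  move: hu0; rewrite vs ua md ge.
  have -> : s.*2 * (e * a) = e.*2 * (s * a) by rewrite -!muln2; ring.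
  by rewrite dvdn_pmul2l // double_gt0.
have ds : d %| s.
  have : d %| gcdn (s * 2) (s * a) by rewrite dvdn_gcd muln2 ds2.
  by rewrite -muln_gcdr (_ : gcdn 2 a = 1) ?muln1 //; apply/eqP; rewrite -/(coprime 2 a) coprime2n.
have cde : coprime d e.
  rewrite /coprime; have h1 : gcdn d e %| s by apply: dvdn_trans (dvdn_gcdl _ _) ds.
  by move: h1; rewrite /s dvdn_addr ?dvdn1 // dvdn_mulr // dvdn_gcdr.
exists d, x; split.
- by rewrite /UD nd cde hn dvdn_mulr.
- have : e * x.*2.+1 < e * d.*2 by rewrite -ax -ua -doubleMr mulnC -hn.
  by rewrite ltn_pmul2l // => /ltnW; rewrite ltn_double.
- rewrite /Rel nd -ge -ax; split => //.
  by rewrite vs -!muln2 dvdn_pmul2r.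
Qed.

Lemma dvd_quot_pos n d : 0 < n -> d %| n -> 0 < n %/ d /\ 0 < d.
Proof.
move=> n0 dn; have d0 : 0 < d by case: (d) dn => //; rewrite dvd0n; lia.
by split => //; rewrite divn_gt0 // dvdn_leq.
Qed.

Lemma rel_half n u v d x d' x' : 0 < n -> d %| n -> d' %| n ->
  Rel n u v d x -> Rel n u v d' x' -> (n %/ d) %| (n %/ d').
Proof.
move=> n0 dn dn' [hu h1 h2] [hu' h1' h2'].
set e := n %/ d in hu h1 *; set e' := n %/ d' in hu' h1' *.
have v0 := rel_v0 _ _ h2.
have hg : gcdn v.-1 v.+1 %| 2.
  have -> : v.+1 = v.-1 + 2 by case: (v) v0 => // w _; rewrite addn2.
  by rewrite gcdnDl dvdn_gcdr.
have ced : coprime e d'.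
  set c := gcdn e d'.
  have : c.*2 %| gcdn v.-1 v.+1.
    rewrite dvdn_gcd; apply/andP; split.
      by apply: dvdn_trans h1; rewrite -!muln2 dvdn_pmul2r // dvdn_gcdl.
    by apply: dvdn_trans h2'; rewrite -!muln2 dvdn_pmul2r // dvdn_gcdr.
  move=> H; have := dvdn_trans H hg.
  by rewrite -muln2 -{2}[2]mul1n dvdn_pmul2r // dvdn1.
have : e %| d' * e' by rewrite mulnC divnK // -{1}(divnK dn) dvdn_mulr.
by rewrite Gauss_dvdr.
Qed.

Lemma rel_uniq_d n u v d x d' x' : 0 < n -> d %| n -> d' %| n ->
  Rel n u v d x -> Rel n u v d' x' -> d = d' /\ x = x'.
Proof.
move=> n0 dn dn' r r'.
have h1 := rel_half _ _ _ _ _ _ _ n0 dn dn' r r'.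
have h2 := rel_half _ _ _ _ _ _ _ n0 dn' dn r' r.
have ee : n %/ d = n %/ d' by apply/eqP; rewrite eqn_dvd h1 h2.
have [e0 d0] := dvd_quot_pos _ _ n0 dn.
have [e0' d0'] := dvd_quot_pos _ _ n0 dn'.
have dd : d = d'.
  apply/eqP; rewrite -(eqn_pmul2l e0) {2}ee divnK // divnK //.
split => //.
case: r r' => hu _ _ [hu' _ _]; move: hu'; rewrite hu -ee => /eqP.
rewrite eqn_pmul2l // => /eqP H. by move: H => /eqP; rewrite eqSS -!muln2 eqn_pmul2r // => /eqP.
Qed.

Lemma rel_uniq_v n u u' v v' d x : 0 < n -> d %| n -> coprime d (n %/ d) ->
  v < n.*2 -> v' < n.*2 -> Rel n u v d x -> Rel n u' v' d x -> v = v'.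
Proof.
move=> n0 dn cd.
wlog le : u u' v v' / v <= v'.
  move=> H lv lv' r r'; case: (leqP v v') => h; first exact: (H u u').
  by apply/esym; apply: (H u' u) => //; apply: ltnW.
move=> lv lv' [hu h1 h2] [hu' h1' h2'].
set e := n %/ d in hu h1 h1' cd.
have [e0 d0] := dvd_quot_pos _ _ n0 dn.
have v0 := rel_v0 _ _ h2.
have v0' := rel_v0 _ _ h2'.
have z1 : e.*2 %| v' - v.
  have := dvdn_sub h1' h1; rewrite (_ : v'.-1 - v.-1 = v' - v) //.
  by case: (v) v0 => // w _; case: (v') v0' => // w' _; rewrite subSS.
have z2 : d.*2 %| v' - v.
  by have := dvdn_sub h2' h2; rewrite subSS.
have z3 : n.*2 %| v' - v.
  move: z1 => /dvdnP [q hq].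
  rewrite hq; move: z2; rewrite hq.
  have -> : q * e.*2 = 2 * (e * q) by rewrite -muln2; ring.
  rewrite -muln2 (mulnC d 2) dvdn_pmul2l // Gauss_dvdr // => dq.
  have -> : n.*2 = 2 * (e * d) by rewrite -muln2 -{1}(divnK dn) -/e; ring.
  by rewrite !dvdn_pmul2l.
case: (posnP (v' - v)) => hz.
  by apply/eqP; rewrite eqn_leq le -subn_eq0 hz.
by have := dvdn_leq hz z3; move: lv'; clear; lia.
Qed.

Definition vof n d := ((chinese (n %/ d) d 0 d.-1).*2.+1) %% n.*2.
Definition uof n d x := ((n %/ d) * x.*2.+1) %% n.*2.

Lemma rel_of n d x : 0 < n -> d %| n -> coprime d (n %/ d) -> x < d ->
  [/\ uof n d x < n.*2, vof n d < n.*2 & Rel n (uof n d x) (vof n d) d x].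
Proof.
move=> n0 dn cd xd.
have [e0 d0] := dvd_quot_pos _ _ n0 dn.
have m0 : 0 < n.*2 by lia.
set e := n %/ d in e0 cd *.
have hn : n = d * e by rewrite /e mulnC divnK.
have ue : e * x.*2.+1 < n.*2.
  rewrite hn -[(d * e).*2]muln2 (mulnC d e) -mulnA ltn_pmul2l //; move: xd; clear; lia.
have ced : coprime e d by rewrite coprime_sym.
split; rewrite ?ltn_mod //.
rewrite /Rel /uof /vof -/e modn_small //; split => //.
- set z := chinese e d 0 d.-1.
  have ez : e %| z.
    by have := chinese_modl ced 0 d.-1; rewrite mod0n -/z /dvdn => ->.
  have hv : (z.*2.+1) %% n.*2 = 1 %[mod e.*2].
    rewrite modn_dvdm; last by rewrite hn doubleMr dvdn_mull.
    have h0 : z.*2 %% e.*2 = 0.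
      by apply/eqP; rewrite -/(dvdn _ _) -!muln2 dvdn_pmul2r.
    by rewrite -addn1 -modnDml h0 add0n.
  have v0 : 0 < (z.*2.+1) %% n.*2.
    case: posnP => // h; move: hv; rewrite h mod0n => /esym/eqP.
    rewrite modn_small ?eqxx //; lia.
  by rewrite -subn1 -eqn_mod_dvd // hv.
- set z := chinese e d 0 d.-1.
  have dz : d %| z.+1.
    have := chinese_modr ced 0 d.-1; rewrite -/z => hz.
    have hd : d.-1 < d by rewrite prednK.
    by rewrite /dvdn -addn1 -modnDml hz (modn_small hd) addn1 prednK // modnn.
  have : (z.*2.+1 %% n.*2).+1 = (z.+1).*2 %[mod d.*2].
    rewrite -addn1 -modnDml modn_dvdm; last by rewrite hn doubleMl dvdn_mulr.
    by rewrite modnDml addn1 doubleS.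
  rewrite /dvdn => ->; rewrite -/(dvdn _ _) -!muln2 dvdn_pmul2r //.
Qed.

Definition S n : {set 'I_n.+1 * 'I_n} := [set s : 'I_n.+1 * 'I_n | UD n s.1 && (s.2 < s.1)].

Definition phi n (H : 0 < n.*2) (s : 'I_n.+1 * 'I_n) : 'I_n.*2 * 'I_n.*2 :=
  (Ordinal (ltn_pmod ((n %/ s.1) * (s.2 : nat).*2.+1) H),
   Ordinal (ltn_pmod ((chinese (n %/ s.1) s.1 0 (s.1 : nat).-1).*2.+1) H)).
Arguments phi {n} H s.

Lemma phi_rel n (H : 0 < n.*2) s : 0 < n -> s \in S n ->
  Rel n (phi H s).1 (phi H s).2 s.1 s.2.
Proof.
move=> n0; rewrite inE => /andP [/andP [dn cd] xd].
by have [_ _ R] := rel_of _ _ _ n0 dn cd xd.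
Qed.

Lemma Q_img n (H : 0 < n.*2) : 0 < n -> quasipolarities n.*2 = phi H @: S n.
Proof.
move=> n0; apply/setP => p; apply/idP/idP.
- move=> pQ; have [d [x [ud xd r]]] := Q_rel _ _ n0 pQ.
  have /andP [dn cd] := ud.
  have ldn : d < n.+1 by rewrite ltnS dvdn_leq.
  have lxn : x < n by apply: leq_trans xd _; rewrite dvdn_leq.
  apply/imsetP; exists (Ordinal ldn, Ordinal lxn).
    by rewrite inE /= ud xd.
  have sS : (Ordinal ldn, Ordinal lxn) \in S n by rewrite inE /= ud xd.
  have r' := phi_rel _ H _ n0 sS; move: r'; rewrite /= => r'.
  case: p r pQ => [a b] /= r _.
  have eu : a = (phi H (Ordinal ldn, Ordinal lxn)).1.
    by apply: val_inj; case: r r' => /= -> _ _ [-> _ _].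
  have ev : b = (phi H (Ordinal ldn, Ordinal lxn)).2.
    apply: val_inj => /=.
    exact: (rel_uniq_v _ _ _ _ _ _ _ n0 dn cd (ltn_ord b) (ltn_pmod _ H) r r').
  by rewrite eu ev -surjective_pairing.
- case/imsetP => s sS ->.
  have r := phi_rel _ H _ n0 sS.
  move: sS; rewrite inE => /andP [/andP [dn _] _].
  exact: rel_Q _ _ _ _ n0 dn r.
Qed.

Lemma phi_inj n (H : 0 < n.*2) : 0 < n -> {in S n &, injective (phi H)}.
Proof.
move=> n0 s s' sS sS' e.
have r := phi_rel _ H _ n0 sS; have r' := phi_rel _ H _ n0 sS'; rewrite e in r.
move: sS sS'; rewrite !inE => /andP [/andP [dn _] _] /andP [/andP [dn' _] _].
have [e1 e2] := rel_uniq_d _ _ _ _ _ _ _ n0 dn' dn r' r.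
case: s s' e1 e2 {e r r' dn dn'} => [a b] [a' b'] /= e1 e2.
by congr (_, _); apply: val_inj.
Qed.

Lemma sum_Q (R : Type) (idx : R) (op : Monoid.com_law idx) n (H : 0 < n.*2) (F : _ -> R) :
  0 < n -> \big[op/idx]_(p in quasipolarities n.*2) F p = \big[op/idx]_(s in S n) F (phi H s).
Proof. by move=> n0; rewrite (Q_img _ H n0) big_imset //; apply: phi_inj. Qed.

Lemma sum_S n (G : nat -> nat) : 0 < n ->
  \sum_(s in S n) G s.1 = \sum_(d < n.+1 | UD n d) d * G d.
Proof.
move=> n0.
rewrite (eq_bigl (fun s : 'I_n.+1 * 'I_n => UD n s.1 && (s.2 < s.1))); last first.
  by move=> s; rewrite inE.
rewrite -(pair_big_dep (fun d : 'I_n.+1 => UD n d) (fun d (x : 'I_n) => x < d) (fun d _ => G d)).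
apply: eq_bigr => d /andP [dn _].
have le : d <= n by rewrite dvdn_leq.
rewrite (big_ord_narrow (F := fun _ => G d) le) /= sum_nat_const card_ord //.
Qed.

Lemma card_Q n : 0 < n -> #|quasipolarities n.*2| = \sum_(d < n.+1 | UD n d) d.
Proof.
move=> n0; have H : 0 < n.*2 by lia.
rewrite -sum1_card (sum_Q _ _ _ _ H) //.
rewrite (sum_S n (fun _ => 1) n0); apply: eq_bigr => d _; apply: muln1.
Qed.

Lemma s1star_sum n : 0 < n -> s1star n = \sum_(d < n.+1 | UD n d) d.
Proof.
move=> n0; rewrite /s1star /UD.
transitivity (\sum_(0 <= d < n.+1 | (d %| n) && coprime d (n %/ d)) d); last by rewrite big_mkord.
rewrite -big_filter_cond; apply: perm_big.
apply: uniq_perm; rewrite ?divisors_uniq ?filter_uniq ?iota_uniq //.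
move=> d; rewrite mem_filter mem_index_iota -dvdn_divisors //.
case dn: (d %| n) => //=; rewrite ltnS dvdn_leq //.
Qed.

Definition Asum n := \sum_(d < n.+1 | UD n d) d.
Definition Bsum n := \sum_(d < n.+1 | UD n d) d * (2 %| d).

Lemma widen n N (G : nat -> nat) : 0 < n -> n < N ->
  \sum_(d < n.+1 | UD n d) G d = \sum_(d < N) (if UD n d then G d else 0).
Proof.
move=> n0 nN; rewrite -big_mkcond (big_ord_widen_cond N) //.
apply: eq_bigl => d; case ud: (UD n d) => //=; move/andP: ud => [dn _].
by rewrite ltnS dvdn_leq.
Qed.

Lemma even_split (G : nat -> nat) M :
  \sum_(d < M.*2) G d = \sum_(i < M) G i.*2 + \sum_(i < M) G i.*2.+1.
Proof.
elim: M => [|M IH]; first by rewrite !big_ord0.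
rewrite doubleS !big_ord_recr /= IH; ring.
Qed.

Lemma UD_odd k i : UD k.*2 i.*2.+1 = UD k i.*2.+1.
Proof.
rewrite /UD; set o := i.*2.+1.
have co : coprime o 2 by rewrite coprimen2 /o /= odd_double.
rewrite -muln2 mulnC Gauss_dvdr //.
case ok: (o %| k) => //=.
by rewrite -muln_divA // coprimeMr co.
Qed.

Lemma UD_even k i : 0 < k -> ~~ odd k -> UD k.*2 i.*2 = UD k i && (2 %| i).
Proof.
move=> k0 ek; rewrite /UD -!muln2 dvdn_pmul2r //.
case ik: (i %| k) => //=.
have i0 : 0 < i by case: (i) ik => //; rewrite dvd0n; lia.
rewrite divnMr // coprimeMl coprime2n.
have hk : k = i * (k %/ i) by rewrite mulnC divnK.
case cik: (coprime i (k %/ i)); rewrite ?andbF ?andbT //=.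
case oi: (odd i).
- rewrite dvdn2 oi /=.
  by move: ek; rewrite {1}hk oddM oi /= => /negbTE.
- rewrite dvdn2 oi /=.
  case oq: (odd (k %/ i)) => //.
  move: cik; rewrite /coprime => /eqP g1.
  have : 2 %| gcdn i (k %/ i) by rewrite dvdn_gcd !dvdn2 oi oq.
  by rewrite g1.
Qed.

Lemma B_odd k : 0 < k -> ~~ (2 %| k) -> Bsum k = 0.
Proof.
move=> k0 ok; rewrite /Bsum; apply: big1 => d /andP [dk _].
case d2: (2 %| d); last by rewrite muln0.
by move: ok; rewrite (dvdn_trans d2 dk).
Qed.

Lemma AB k : 0 < k -> 2 %| k -> Asum k.*2 = Asum k + Bsum k.
Proof.
move=> k0 k2.
have ek : ~~ odd k by rewrite -dvdn2.
set M := k.*2.+1.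
have k20 : 0 < k.*2 by lia.
have l1 : k.*2 < M.*2 by rewrite /M; lia.
have l2 : k < M.*2 by rewrite /M; lia.
have l3 : k < M by rewrite /M; lia.
rewrite /Asum /Bsum (widen _ _ (fun d => d) k20 l1) (widen _ _ (fun d => d) k0 l2).
rewrite (widen _ _ (fun d => d * (2 %| d)) k0 l2).
rewrite (even_split (fun d => if UD k.*2 d then d else 0)).
rewrite (even_split (fun d => if UD k d then d else 0)).
rewrite (even_split (fun d => if UD k d then d * (2 %| d) else 0)) /=.
have odd0 : \sum_(i < M) (if UD k i.*2.+1 then i.*2.+1 * (2 %| i.*2.+1) else 0) = 0.
  apply: big1 => i _; rewrite dvdn2 /= odd_double /= muln0; by case: ifP.
have oddeq : \sum_(i < M) (if UD k.*2 i.*2.+1 then i.*2.+1 else 0)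
           = \sum_(i < M) (if UD k i.*2.+1 then i.*2.+1 else 0).
  by apply: eq_bigr => i _; rewrite UD_odd.
have evB : \sum_(i < M) (if UD k i.*2 then i.*2 * (2 %| i.*2) else 0)
         = \sum_(i < M) (if UD k i.*2 then i.*2 else 0).
  by apply: eq_bigr => i _; rewrite dvdn2 odd_double muln1.
have ev2 : \sum_(i < M) (if UD k.*2 i.*2 then i.*2 else 0)
         = 2 * \sum_(i < M) (if UD k i then i * (2 %| i) else 0).
  rewrite big_distrr /=; apply: eq_bigr => i _; rewrite UD_even //.
  case: (UD k i); case: (2 %| i) => /=; rewrite ?muln1 ?muln0 //; lia.
have Bw : \sum_(i < M) (if UD k i then i * (2 %| i) else 0) = Bsum k.
  by rewrite /Bsum (widen _ _ (fun d => d * (2 %| d)) k0 l3).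
have hE : \sum_(i < M) (if UD k i.*2 then i.*2 else 0) = Bsum k.
  rewrite /Bsum (widen _ _ (fun d => d * (2 %| d)) k0 l2).
  by rewrite (even_split (fun d => if UD k d then d * (2 %| d) else 0)) /= odd0 evB addn0.
rewrite odd0 oddeq ev2 Bw evB hE; ring.
Qed.

Import GRing.Theory Num.Theory.
Local Open Scope ring_scope.

Lemma prod_pairs (F : nat -> algC) (a t : nat) :
  (forall j : nat, (a <= j < a + t)%N -> F j * F (j + t)%N = 1) ->
  \prod_(a <= j < (a + t + t)%N) F j = 1.
Proof.
move=> H; rewrite (big_cat_nat (n := (a + t)%N)) ?leq_addr //=.
have E1 := big_addn 0 (a + t) a xpredT F; rewrite add0n in E1.
have E2 := big_addn 0 (a + t + t) (a + t) xpredT F; rewrite add0n in E2.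
rewrite E1 E2 addKn (addKn (a + t)) -big_split /=.
apply: big1_seq => i /andP [_]; rewrite mem_index_iota => /andP [_ it].
rewrite addnA; apply: H; rewrite leq_addl /=; lia.
Qed.

Lemma zn_neg1 (n : nat) (z : algC) : (0 < n)%N -> n.*2.-primitive_root z -> z ^+ n = -1.
Proof.
move=> n0 pz.
have h : (z ^+ n) ^+ 2 = 1 by rewrite -exprM muln2 prim_expr_order.
have h1 : z ^+ n != 1.
  rewrite -(expr0 z) (eq_prim_root_expr pz) mod0n modn_small; first by rewrite -lt0n.
  by rewrite -addnn -{1}[n]addn0 ltn_add2l.
by move/eqP: h; rewrite sqrf_eq1 (negbTE h1) /= => /eqP.
Qed.

Lemma z_neq0 (m : nat) (z : algC) : (0 < m)%N -> m.-primitive_root z -> z != 0.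
Proof.
move=> m0 pz; apply/negP => /eqP z0; have := prim_expr_order pz.
by rewrite z0 expr0n; case: m m0 {pz} => // m _ /eqP; rewrite eq_sym oner_eq0.
Qed.

Lemma prod_val (n : nat) (z : algC) (p : 'I_n.*2 * 'I_n.*2) d x :
  (0 < n)%N -> n.*2.-primitive_root z -> (d %| n)%N -> Rel n p.1 p.2 d x ->
  \prod_(j < n.*2) ((1 + z ^+ ((j + n.*2 - aff_act p j) %% n.*2)) /
                    (1 - z ^+ ((j + n.*2 - aff_act p j) %% n.*2))) = (2 %| d)%:R.
Proof.
move=> n0 pz dn r.
have := rel_Q _ _ _ _ n0 dn r; rewrite inE => /and3P [_ _ /forallP der].
case: p r der => [[u ltu] [v ltv]] /= r der.
set m := n.*2.
have m0 : (0 < m)%N by rewrite /m; lia.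
pose E (j : nat) := ((j + m - (v * j + u) %% m) %% m)%N.
pose F (j : nat) := (1 + z ^+ E j) / (1 - z ^+ E j).
have -> : \prod_(j < m) ((1 + z ^+ ((j + m - aff_act (Ordinal ltu, Ordinal ltv) j) %% m)) /
                    (1 - z ^+ ((j + m - aff_act (Ordinal ltu, Ordinal ltv) j) %% m)))
          = \prod_(j < m) F j by apply: eq_bigr => j _; rewrite /aff_act.
have Lz : forall j, (j < m)%N -> z ^+ E j * z ^+ (v * j + u) = z ^+ j.
  move=> j lj; rewrite /E prim_expr_mod // -(prim_expr_mod pz (v * j + u)) -exprD.
  rewrite subnK ?exprD ?(prim_expr_order pz) ?mulr1 //.
  exact: leq_trans (ltnW (ltn_pmod _ m0)) (leq_addl _ _).
have Dz : forall j, (j < m)%N -> z ^+ E j != 1.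
  move=> j lj; apply/negP => /eqP h1; have := Lz j lj; rewrite h1 mul1r => /eqP.
  rewrite (eq_prim_root_expr pz) => /eqP h.
  by have := der (Ordinal lj); rewrite /aff_act /= h modn_small // eqxx.
have zn := zn_neg1 _ _ n0 pz.
have zu : forall a, z ^+ a != 0 by move=> a; rewrite expf_neq0 // (z_neq0 _ _ m0 pz).
case: r => hu h1 h2.
set e := (n %/ d)%N in hu h1.
have hn : n = (d * e)%N by rewrite /e mulnC divnK.
have v0 := rel_v0 _ _ h2.
case: (boolP (2 %| d)%N) => d2.
-
  set t := (d./2 * e)%N.
  have nt : n = t.*2 by rewrite hn /t doubleMl even_halfK // -dvdn2.
  have [s hs] : exists s, v.-1 = (s * e.*2)%N by apply/dvdnP.
  have [r hr] : exists r, (s * e + 1 = r * 2)%N.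
    apply/dvdnP; apply: (dvdn_trans d2).
    have : (d.*2 %| (s * e + 1).*2)%N.
      by rewrite (_ : ((s * e + 1).*2 = v.+1)%N) // -(prednK v0) hs -!muln2; ring.
    by rewrite -!muln2 dvdn_pmul2r.
  have key : (n + v * t = t + m * r)%N.
    rewrite -(prednK v0) hs /m nt -!muln2.
    have -> : (t * 2 * 2 * r = t * 2 * (r * 2))%N by ring.
    rewrite -hr; ring.
  have Shift : forall j, (j + t < m)%N -> z ^+ E (j + t) = - z ^+ E j.
    move=> j ljt; have lj : (j < m)%N by apply: leq_ltn_trans ljt; rewrite leq_addr.
    apply: (mulIf (zu (v * (j + t) + u)%N)); rewrite Lz //.
    rewrite mulNr mulnDr -addnA (addnC (v * t)) addnA exprD mulrA Lz //.
    rewrite -mulrN1 -zn -!exprD; apply/eqP; rewrite (eq_prim_root_expr pz).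
    rewrite -addnA (addnC (v * t)) key addnA mod_add_dvd //.
    exact: dvdn_mulr.
  have Pair : forall j, (j + t < m)%N -> F j * F (j + t)%N = 1.
    move=> j ljt; have lj : (j < m)%N by apply: leq_ltn_trans ljt; rewrite leq_addr.
    rewrite /F Shift //.
    have a1 := Dz j lj; have a2 := Dz _ ljt; rewrite Shift // in a2.
    set a := z ^+ E j in a1 a2 *.
    rewrite opprK mulf_div [(1 - a) * _]mulrC divff // mulf_neq0 //.
      by rewrite addr_eq0 eq_sym.
    by rewrite subr_eq0 eq_sym.
  rewrite -(big_mkord (fun _ => true) F).
  have mt : m = (0 + t + t + t + t)%N by rewrite /m nt; lia.
  rewrite mt (big_cat_nat (n := (0 + t + t)%N)) ?leq_addr //=.
  rewrite (prod_pairs F 0 t) ?(prod_pairs F (0 + t + t) t) ?mulr1 //.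
  + move=> j /andP [_ jt]; apply: Pair; rewrite mt; lia.
  + move=> j /andP [_ jt]; apply: Pair; rewrite mt; lia.
  + exact: leq_trans (leq_addr t _) (leq_addr t _).
-
  have od : odd d by move: d2; rewrite dvdn2 negbK.
  set c := ((x.*2.+1 + d)./2)%N.
  have hc : (c.*2 = x.*2.+1 + d)%N.
    by rewrite /c even_halfK // oddD /= odd_double od.
  set j0 := (e * c)%N.
  have hj0 : (u + n = j0.*2)%N by rewrite hu hn /j0 doubleMr hc; ring.
  set j1 := (j0 %% m)%N.
  have lt1 : (j1 < m)%N by rewrite ltn_mod.
  have e1 : z ^+ (v * j1 + u) = z ^+ (v * j0 + u).
    by rewrite -(prim_expr_mod pz (v * j1 + u)) -(prim_expr_mod pz (v * j0 + u))
               /j1 -modnDml modnMmr modnDml.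
  have e2 : z ^+ j1 = z ^+ (v * j0 + u) * z ^+ n.
    rewrite -exprD /j1 prim_expr_mod //; apply/eqP; rewrite (eq_prim_root_expr pz) eq_sym.
    have -> : (v * j0 + u + n = j0 + v.+1 * e * c)%N.
      by rewrite -addnA hj0 /j0 -!muln2; ring.
    apply/eqP; apply: mod_add_dvd; apply: dvdn_mulr.
    by rewrite /m hn doubleMl dvdn_mul.
  have zj : z ^+ E j1 = -1.
    have := Lz j1 lt1; rewrite e1 e2 [_ * z ^+ n]mulrC => /(mulIf (zu _)).
    by rewrite zn.
  rewrite (bigD1 (Ordinal lt1)) //= /F zj addrN mul0r mul0r.
  by [].
Qed.


Theorem theorem2p2 (k : nat) (zeta : algC) :
  (0 < k)%N -> (k.*2).-primitive_root zeta ->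
  let lhs := \sum_(p in Q k)
      \prod_(j < k.*2)
        ((1 + zeta ^+ ((j + k.*2 - aff_act p j) %% k.*2)) /
         (1 - zeta ^+ ((j + k.*2 - aff_act p j) %% k.*2))) in
  lhs = (2 %| k)%:R * ((#|Q k.*2|)%:R - (#|Q k|)%:R)
  /\ (2 %| k)%:R * ((#|Q k.*2|)%:R - (#|Q k|)%:R)
     = (2 %| k)%:R * ((s1star k.*2)%:R - (s1star k)%:R) :> algC.
Proof.
move=> k0 pz lhs.
have H : (0 < k.*2)%N by lia.
have cQ1 : #|Q k| = Asum k by rewrite /Q card_Q.
have cQ2 : #|Q k.*2| = Asum k.*2 by rewrite /Q card_Q.
have s1 : s1star k = Asum k by rewrite s1star_sum.
have s2 : s1star k.*2 = Asum k.*2 by rewrite s1star_sum.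
have hl : lhs = (Bsum k)%:R.
  rewrite /lhs /Q (sum_Q _ _ _ _ H) //.
  transitivity (\sum_(s in S k) ((2 %| s.1) : nat)%:R : algC).
    apply: eq_bigr => s sS; have r := phi_rel _ H _ k0 sS.
    move: sS; rewrite inE => /andP [/andP [dn _] _].
    exact: prod_val k0 pz dn r.
  by rewrite -natr_sum (sum_S k (fun d => ((2 %| d) : nat)) k0).
split; last by rewrite cQ1 cQ2 s1 s2.
rewrite hl cQ1 cQ2; case: (boolP (2 %| k)%N) => k2.
- by rewrite (AB k k0 k2) natrD mul1r addrC addKr.
- by rewrite (B_odd k k0 k2) mul0r.
Qed.
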